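(* Let $N_1\ge N_2$, $N_3$, $T$ be nonnegative integers with $T\ge N_1+N_3$. For $i\in\{1,2\}$ let $\tilde T_i$ be a maximizer over $T'\in\{N_i,\dots,T-N_3\}$ of $\min\left(\frac{T'+1-N_i}{T'+1},\frac{T-T'+1-N_3}{T-T'+1}\right)$. For all positive integers $A,B$, set $$k_1=A(T-\tilde T_1+1-N_3)(\tilde T_1+1-N_1),\quad k_2=B(T-\tilde T_2+1-N_3)(\tilde T_2+1-N_2),$$ $$n=\max\Big(A(\tilde T_1+1)(T-\tilde T_1+1-N_3),\;B(\tilde T_2+1)(T-\tilde T_2+1-N_3),\;A(T-\tilde T_1+1)(\tilde T_1+1-N_1)+B(T-\tilde T_2+1)(\tilde T_2+1-N_2)\Big).$$ Then the rate pair $(R_1,R_2)=(k_1/n,\,k_2/n)$ is achievable.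
   Context: Network: two sources, one relay, one destination; no direct source–destination link. Source $i\in\{1,2\}$ has messages $s_{t,i}\in\mathbb{F}^{k_i}$, $t\ge0$, over a finite field $\mathbb{F}$. A time-invariant $(n_1,n_2,n_3,k_1,k_2,T)_{\mathbb{F}}$ streaming code (unbounded memory): source $i$ sends at time $t$ a packet $x^{(1)}_{t,i}\in\mathbb{F}^{n_i}$, a fixed function of $s_{0,i},\dots,s_{t,i}$; a relay function $g$, the same at every time $t$, takes the packets received from both sources at times $t-T,\dots,t$ together with the relay's previously produced estimates of past source messages, and outputs a packet $x^{(2)}_t\in\mathbb{F}^{n_3}$ and estimates of $s_{t-T,1},s_{t-T,2}$; the destination outputs at time $t+T$ estimates $\hat s_{t,i}$ from its received packets up to time $t+T$. Each link is a packet erasure channel (received packet is the sent one or the erasure symbol $*$). An $N$-erasure sequence has exactly $N$ erased times; link source $i\to$relay suffers an arbitrary $N_i$-erasure sequence, relay$\to$destination an arbitrary $N_3$-erasure sequence. The code is $(N_1,N_2,N_3)$-achievable if $\hat s_{t,i}=s_{t,i}$ always. Rate pair: $R_i=k_i/n$, $n=\max(n_1,n_2,n_3)$; a rate pair is achievable if it is the rate pair of some $(N_1,N_2,N_3)$-achievable code (over some finite field). *)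

(* Defs.v *)
From HB Require Import structures.
From mathcomp Require Import all_boot all_order all_algebra.
Set Implicit Arguments. Unset Strict Implicit. Unset Printing Implicit Defensive.
Import Order.TTheory GRing.Theory Num.Theory.
Local Open Scope ring_scope.

(* An N-erasure sequence: exactly N erased times (e t = true means erased). *)
Definition erasure_seq (N : nat) (e : nat -> bool) : Prop :=
  exists l : seq nat, [/\ uniq l, size l = N & forall t, e t = (t \in l)].

Definition erase (A : Type) (e : nat -> bool) (x : nat -> A) (t : nat) : option A :=
  if e t then None else Some (x t).

(* A time-invariant (n1,n2,n3,k1,k2,T)_F streaming code (unbounded memory).
   - enc1/enc2 : source i maps the list [s_{0,i}; ...; s_{t,i}] to x^{(1)}_{t,i};
   - relay : the single (time-invariant) relay function g: from the list of
     received packet pairs at times max(0,t-T),...,t and the list of its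
     previously produced estimates (of s_{0,.},...,s_{t-T-1,.}) it outputs
     x^{(2)}_t and estimates of (s_{t-T,1}, s_{t-T,2});
   - dec : from the received packets at times 0..t+T the destination outputs
     the estimates of (s_{t,1}, s_{t,2}). *)
Record streaming_code (F : finFieldType) (n1 n2 n3 k1 k2 : nat) : Type := {
  enc1 : seq 'rV[F]_k1 -> 'rV[F]_n1;
  enc2 : seq 'rV[F]_k2 -> 'rV[F]_n2;
  relay : seq (option 'rV[F]_n1 * option 'rV[F]_n2) ->
          seq ('rV[F]_k1 * 'rV[F]_k2) -> 'rV[F]_n3 * ('rV[F]_k1 * 'rV[F]_k2);
  dec : seq (option 'rV[F]_n3) -> 'rV[F]_k1 * 'rV[F]_k2 }.

Section Semantics.
Variables (F : finFieldType) (n1 n2 n3 k1 k2 T : nat).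
Variable C : streaming_code F n1 n2 n3 k1 k2.
Variables (s1 : nat -> 'rV[F]_k1) (s2 : nat -> 'rV[F]_k2).
Variables (e1 e2 e3 : nat -> bool).

Definition src1_pkt (t : nat) : 'rV[F]_n1 := enc1 C (mkseq s1 t.+1).
Definition src2_pkt (t : nat) : 'rV[F]_n2 := enc2 C (mkseq s2 t.+1).

(* packets received by the relay at times max(0,t-T), ..., t *)
Definition relay_window (t : nat) : seq (option 'rV[F]_n1 * option 'rV[F]_n2) :=
  [seq (erase e1 src1_pkt u, erase e2 src2_pkt u) | u <- iota (t - T)%N (t - (t - T))%N.+1].

(* relay_est t = the relay's estimates produced before time t,
   i.e. estimates of the messages at times 0, ..., t-T-1 *)
Fixpoint relay_est (t : nat) : seq ('rV[F]_k1 * 'rV[F]_k2) :=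
  match t with
  | 0 => [::]
  | t'.+1 => if (T <= t')%N then rcons (relay_est t') (relay C (relay_window t') (relay_est t')).2
             else relay_est t'
  end.

Definition relay_pkt (t : nat) : 'rV[F]_n3 := (relay C (relay_window t) (relay_est t)).1.

Definition dest_est (t : nat) : 'rV[F]_k1 * 'rV[F]_k2 :=
  dec C (mkseq (erase e3 relay_pkt) (t + T)%N.+1).

End Semantics.

Definition code_achievable (F : finFieldType) (n1 n2 n3 k1 k2 T : nat)
    (C : streaming_code F n1 n2 n3 k1 k2) (N1 N2 N3 : nat) : Prop :=
  forall (s1 : nat -> 'rV[F]_k1) (s2 : nat -> 'rV[F]_k2) (e1 e2 e3 : nat -> bool),
    erasure_seq N1 e1 -> erasure_seq N2 e2 -> erasure_seq N3 e3 ->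
    forall t, dest_est T C s1 s2 e1 e2 e3 t = (s1 t, s2 t).

Definition rate_pair_achievable (N1 N2 N3 T : nat) (R1 R2 : rat) : Prop :=
  exists (F : finFieldType) (n1 n2 n3 k1 k2 : nat) (C : streaming_code F n1 n2 n3 k1 k2),
    code_achievable T C N1 N2 N3 /\
    let n := maxn n1 (maxn n2 n3) in
    R1 = (k1%:R / n%:R)%R /\ R2 = (k2%:R / n%:R)%R.

Definition obj (N N3 T T' : nat) : rat :=
  Num.min ((T' + 1 - N)%N%:R / (T' + 1)%N%:R)
          ((T - T' + 1 - N3)%N%:R / (T - T' + 1)%N%:R).

Definition is_maximizer (N N3 T Tt : nat) : Prop :=
  (N <= Tt <= T - N3)%N /\
  forall T', (N <= T' <= T - N3)%N -> (obj N N3 T T' <= obj N N3 T Tt)%R.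

(* Main.v *)
Require Import Defs.
From HB Require Import structures.
From mathcomp Require Import all_boot all_order all_algebra.
From mathcomp Require Import zify.
Set Implicit Arguments. Unset Strict Implicit. Unset Printing Implicit Defensive.
Import Order.TTheory GRing.Theory Num.Theory.
Local Open Scope ring_scope.

Definition coef (F : finFieldType) k (v : 'rV[F]_k) (i : nat) : F :=
  if insub i is Some i' then v 0 i' else 0.

Definition Eb (F : finFieldType) k r m (x : F) (v : 'rV[F]_k) : 'rV[F]_m :=
  \row_(b < m) (\poly_(c < r) coef v (c * m + b)%N).[x].

Lemma Eb_inj (F : finFieldType) k r m (s : seq nat) (v w : 'rV[F]_k) :
  k = (r * m)%N -> uniq (map (fun j => (j%:R : F)) s) -> (r <= size s)%N ->
  (forall j, j \in s -> Eb r m (j%:R) v = Eb r m (j%:R) w) -> v = w.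
Proof.
move=> km us rs E.
have C : forall c b, (c < r)%N -> (b < m)%N -> coef v (c * m + b) = coef w (c * m + b).
  move=> c b cr bm.
  pose p := \poly_(c < r) (coef v (c * m + b) - coef w (c * m + b)).
  have p0 : p = 0.
    apply: (roots_geq_poly_eq0 (rs := map (fun j => (j%:R : F)) s)) => //.
      apply/allP => x /mapP [j js ->]; rewrite /root /p horner_poly.
      have := congr1 (fun M : 'rV_m => M 0 (Ordinal bm)) (E j js).
      rewrite !mxE !horner_poly /= => H.
      by under eq_bigr do rewrite mulrBl; rewrite sumrB H subrr.
    by rewrite size_map; apply: leq_trans (size_poly _ _) rs.
  have := congr1 (fun q : {poly F} => q`_c) p0.
  by rewrite coef_poly cr coef0 => /eqP; rewrite subr_eq0 => /eqP.
apply/rowP => i.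
have m0 : (0 < m)%N by rewrite lt0n; apply/negP => /eqP m0; have := ltn_ord i; rewrite {2}km m0 muln0.
have := C (i %/ m)%N (i %% m)%N.
rewrite -divn_eq ltn_mod m0 ltn_divLR // -km ltn_ord /coef.
by rewrite valK => ->.
Qed.

Definition decode (F : finFieldType) k r m L (obs : 'I_L -> option 'rV[F]_m) : 'rV[F]_k :=
  odflt 0 [pick v : 'rV[F]_k | [forall j : 'I_L,
     if obs j is Some y then Eb r m (j%:R) v == y else true]].

Lemma decode_ok (F : finFieldType) k r m L (obs : 'I_L -> option 'rV[F]_m) (v : 'rV[F]_k) :
  k = (r * m)%N ->
  (forall i j : nat, (i < L)%N -> (j < L)%N -> (i%:R : F) = j%:R -> i = j) ->
  (forall j, obs j = None \/ obs j = Some (Eb r m (j%:R) v)) ->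
  (r <= count (fun j => obs j != None) (enum 'I_L))%N ->
  @decode F k r m L obs = v.
Proof.
move=> km inj Hobs cnt; rewrite /decode.
case: pickP => [w /forallP Hw | H] /=; last first.
  have := H v; move/negbT/negP => []; apply/forallP => j.
  by case: (Hobs j) => ->.
apply/esym/(Eb_inj (r := r) (m := m) (s := map val (filter (fun j => obs j != None) (enum 'I_L)))) => //.
- rewrite (map_inj_in_uniq (s := [seq \val i | i <- enum 'I_L & obs i != None])).
    by rewrite (map_inj_uniq val_inj); apply: filter_uniq; apply: enum_uniq.
  by move=> x y /mapP[x' _ ->] /mapP[y' _ ->] /(inj _ _ (ltn_ord x') (ltn_ord y')).
- by rewrite size_map size_filter.
move=> j /mapP [j' ]; rewrite mem_filter => /andP [oj _] ->.
have := Hw j'; case: (Hobs j') oj => -> // _ /eqP ->.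
by [].
Qed.

Lemma erase_count N e u L : erasure_seq N e ->
  (count (fun i : 'I_L => e (u + i)%N) (enum 'I_L) <= N)%N.
Proof.
case=> l [ul sl El]; rewrite -size_filter -sl.
rewrite -(size_map (fun i : 'I_L => (u + i)%N)).
apply: uniq_leq_size.
  rewrite map_inj_uniq; first by apply: filter_uniq; apply: enum_uniq.
  by move=> x y /addnI /val_inj.
by move=> x /mapP [i]; rewrite mem_filter El => /andP [H _] ->.
Qed.

Lemma nonerase_count N e u L : erasure_seq N e ->
  (L - N <= count (fun i : 'I_L => ~~ e (u + i)%N) (enum 'I_L))%N.
Proof.
move=> /(erase_count u L) H.
have := count_predC (fun i : 'I_L => e (u + i)%N) (enum 'I_L).
rewrite size_enum_ord => E.
change (count (fun i : 'I_L => ~~ e (u + i)%N) (enum 'I_L)) with (count (predC (fun i : 'I_L => e (u + i)%N)) (enum 'I_L)). lia.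
Qed.

Lemma Fp_inj p : prime p -> forall i j : nat, (i < p)%N -> (j < p)%N ->
  (i%:R : 'F_p) = j%:R -> i = j.
Proof.
move=> pp.
suff H : forall i j : nat, (i <= j)%N -> (j < p)%N -> (i%:R : 'F_p) = j%:R -> i = j.
  move=> i j ip jp; case: (leqP i j) => ij; first exact: H.
  by move=> E; apply/esym/H => //; apply/ltnW.
move=> i j ij jp E.
have : (p %| j - i)%N by rewrite (dvdn_pcharf (pchar_Fp pp)) natrB // E subrr.
have [lij|] := ltnP i j; last by lia.
move/dvdn_leq; rewrite subn_gt0 => /(_ lij). lia.
Qed.

Definition src_enc (F : finFieldType) k L r m (ss : seq 'rV[F]_k) : 'rV[F]_(L * m) :=
  mxvec (\matrix_(j < L) Eb r m (j%:R) (nth 0 (rev ss) j)).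

Definition relay_dec (F : finFieldType) k L r m (Ts : nat)
    (obsw : seq (option 'rV[F]_(L * m))) (j : nat) : 'rV[F]_k :=
  if (Ts + j < size obsw)%N then
    @decode F k r m L (fun i : 'I_L => omap (fun p => row i (vec_mx p))
                                          (nth None (rev obsw) (Ts + j - i)))
  else 0.

Lemma nth_rev_mkseq (A : Type) (x0 : A) f n d : (d < n)%N ->
  nth x0 (rev (mkseq f n)) d = f (n.-1 - d)%N.
Proof.
move=> dn; rewrite nth_rev size_mkseq // nth_mkseq; last by lia.
by congr f; lia.
Qed.

Lemma relay_dec_ok (F : finFieldType) k L r m Ts T N (s : nat -> 'rV[F]_k) e tau j :
  erasure_seq N e -> L = Ts.+1 -> r = (L - N)%N -> k = (r * m)%N ->
  (forall i j : nat, (i < L)%N -> (j < L)%N -> (i%:R : F) = j%:R -> i = j) ->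
  (Ts + j <= tau)%N -> (Ts + j <= T)%N ->
  @relay_dec F k L r m Ts
    [seq erase e (fun u => src_enc L r m (mkseq s u.+1)) u | u <- iota (tau - T) (tau - (tau - T)).+1] j
  = s (tau - Ts - j)%N.
Proof.
move=> eN HL Hr km inj h1 h2.
rewrite /relay_dec size_map size_iota.
have -> : (Ts + j < (tau - (tau - T)).+1)%N by lia.
set t := (tau - Ts - j)%N.
apply: decode_ok => // [i|].
  have iL := ltn_ord i.
  rewrite nth_rev ?size_map ?size_iota; last by lia.
  rewrite (nth_map 0%N); last by rewrite size_iota; lia.
  rewrite nth_iota; last by lia.
  have -> : (tau - T + ((tau - (tau - T)).+1 - (Ts + j - i).+1) = t + i)%N by lia.
  rewrite /erase; case: (e (t + i)%N); [by left | right] => /=.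
  rewrite /src_enc mxvecK rowK nth_rev_mkseq; last by lia.
  by congr (Some (Eb _ _ _ (s _))); lia.
rewrite Hr; apply: (leq_trans (nonerase_count t L eN)).
rewrite leq_eqVlt; apply/orP; left; apply/eqP.
apply: eq_count => i.
have iL := ltn_ord i.
rewrite nth_rev ?size_map ?size_iota; last by lia.
rewrite (nth_map 0%N); last by rewrite size_iota; lia.
rewrite nth_iota; last by lia.
have -> : (tau - T + ((tau - (tau - T)).+1 - (Ts + j - i).+1) = t + i)%N by lia.
by rewrite /erase; case: (e (t + i)%N).
Qed.

Definition relay_part (F : finFieldType) k Ls rs ms Lr rr mr Ts
    (obsw : seq (option 'rV[F]_(Ls * ms))) : 'rV[F]_(Lr * mr) :=
  mxvec (\matrix_(j < Lr) Eb rr mr (j%:R) (@relay_dec F k Ls rs ms Ts obsw j)).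

Definition dest_part (F : finFieldType) k Lr rr mr Tr
    (rl : seq (option 'rV[F]_(Lr * mr))) : 'rV[F]_k :=
  @decode F k rr mr Lr (fun j : 'I_Lr => omap (fun p => row j (vec_mx p))
                                        (nth None (rev rl) (Tr - j))).

Lemma dest_ok (F : finFieldType) k Lr rr mr Ts T N (s : nat -> 'rV[F]_k) e
    (y : nat -> 'rV[F]_(Lr * mr)) t :
  erasure_seq N e -> Lr = (T - Ts).+1 -> (Ts <= T)%N -> rr = (Lr - N)%N -> k = (rr * mr)%N ->
  (forall i j : nat, (i < Lr)%N -> (j < Lr)%N -> (i%:R : F) = j%:R -> i = j) ->
  (forall j : 'I_Lr, row j (vec_mx (y (t + Ts + j)%N)) = Eb rr mr (j%:R) (s t)) ->
  @dest_part F k Lr rr mr (T - Ts) (mkseq (erase e y) (t + T).+1) = s t.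
Proof.
move=> eN HL TsT Hr km inj Hy.
apply: decode_ok => // [j|].
  have jL := ltn_ord j.
  rewrite nth_rev_mkseq; last by lia.
  have -> : ((t + T).+1.-1 - (T - Ts - j) = t + Ts + j)%N by lia.
  rewrite /erase; case: (e (t + Ts + j)%N); [by left | right] => /=.
  by rewrite Hy.
rewrite Hr; apply: (leq_trans (nonerase_count (t + Ts) Lr eN)).
rewrite leq_eqVlt; apply/orP; left; apply/eqP.
apply: eq_count => j.
have jL := ltn_ord j.
rewrite nth_rev_mkseq; last by lia.
have -> : ((t + T).+1.-1 - (T - Ts - j) = t + Ts + j)%N by lia.
by rewrite /erase; case: (e (t + Ts + j)%N).
Qed.

Definition mkcode (F : finFieldType) k1 k2 Ls1 rs1 ms1 Lr1 rr1 mr1 Ls2 rs2 ms2 Lr2 rr2 mr2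
  (T1 T2 T : nat) : streaming_code F (Ls1 * ms1) (Ls2 * ms2) (Lr1 * mr1 + Lr2 * mr2) k1 k2 :=
 {| enc1 := @src_enc F k1 Ls1 rs1 ms1;
    enc2 := @src_enc F k2 Ls2 rs2 ms2;
    relay := fun w _ => (row_mx (@relay_part F k1 Ls1 rs1 ms1 Lr1 rr1 mr1 T1 (map fst w))
                                (@relay_part F k2 Ls2 rs2 ms2 Lr2 rr2 mr2 T2 (map snd w)), (0, 0));
    dec := fun rl => (@dest_part F k1 Lr1 rr1 mr1 (T - T1) (map (omap lsubmx) rl),
                      @dest_part F k2 Lr2 rr2 mr2 (T - T2) (map (omap rsubmx) rl)) |}.

Lemma map_omap_erase (X Y : Type) (f : X -> Y) e x n :
  map (omap f) (mkseq (erase e x) n) = mkseq (erase e (fun u => f (x u))) n.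
Proof. by rewrite /mkseq -map_comp; apply: eq_map => u; rewrite /erase /=; case: (e u). Qed.

Theorem lemma8 (N1 N2 N3 T : nat) (T1 T2 A B : nat) :
  (N2 <= N1)%N -> (N1 + N3 <= T)%N ->
  is_maximizer N1 N3 T T1 -> is_maximizer N2 N3 T T2 ->
  (0 < A)%N -> (0 < B)%N ->
  let k1 := (A * (T - T1 + 1 - N3) * (T1 + 1 - N1))%N in
  let k2 := (B * (T - T2 + 1 - N3) * (T2 + 1 - N2))%N in
  let n := maxn (A * (T1 + 1) * (T - T1 + 1 - N3))
             (maxn (B * (T2 + 1) * (T - T2 + 1 - N3))
                   (A * (T - T1 + 1) * (T1 + 1 - N1) + B * (T - T2 + 1) * (T2 + 1 - N2))) in
  rate_pair_achievable N1 N2 N3 T (k1%:R / n%:R)%R (k2%:R / n%:R)%R.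
Proof.
move=> _ _ [/andP [h11 h12] _] [/andP [h21 h22] _] _ _ k1 k2 n.
have [p Tp pp] := prime_above T.+1.
set rs1 := (T1.+1 - N1)%N; set rr1 := ((T - T1).+1 - N3)%N.
set rs2 := (T2.+1 - N2)%N; set rr2 := ((T - T2).+1 - N3)%N.
exists ('F_p : finFieldType).
have inj : forall L, (L <= T.+1)%N -> forall i j : nat, (i < L)%N -> (j < L)%N ->
    (i%:R : 'F_p) = j%:R -> i = j.
  move=> L LT i j iL jL; apply: Fp_inj => //; lia.
exists (T1.+1 * (A * rr1))%N, (T2.+1 * (B * rr2))%N,
  ((T - T1).+1 * (A * rs1) + (T - T2).+1 * (B * rs2))%N, (rs1 * (A * rr1))%N, (rs2 * (B * rr2))%N.
exists (mkcode 'F_p (rs1 * (A * rr1)) (rs2 * (B * rr2)) T1.+1 rs1 (A * rr1) (T - T1).+1 rr1 (A * rs1)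
          T2.+1 rs2 (B * rr2) (T - T2).+1 rr2 (B * rs2) T1 T2 T).
split.
  move=> s1 s2 e1 e2 e3 E1 E2 E3 t; rewrite /dest_est; cbn [dec mkcode]; congr pair.
    rewrite map_omap_erase; apply: (dest_ok (Ts := T1) (N := N3)) => //.
    - lia.
    - by rewrite mulnCA [RHS]mulnCA [(rs1 * rr1)%N]mulnC.
    - by apply: (inj (T - T1).+1); lia.
    move=> j; have jL := ltn_ord j.
    rewrite /relay_pkt; cbn [relay mkcode].
    rewrite row_mxKl /relay_part mxvecK rowK; congr Eb.
    rewrite /relay_window -map_comp.
    rewrite (@relay_dec_ok _ _ _ _ _ T1 T N1 s1 e1) //; try lia.
    - by congr s1; lia.
    - by apply: (inj T1.+1); lia.
  rewrite map_omap_erase; apply: (dest_ok (Ts := T2) (N := N3)) => //.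
  - lia.
  - by rewrite mulnCA [RHS]mulnCA [(rs2 * rr2)%N]mulnC.
  - by apply: (inj (T - T2).+1); lia.
  move=> j; have jL := ltn_ord j.
  rewrite /relay_pkt; cbn [relay mkcode].
  rewrite row_mxKr /relay_part mxvecK rowK; congr Eb.
  rewrite /relay_window -map_comp.
  rewrite (@relay_dec_ok _ _ _ _ _ T2 T N2 s2 e2) //; try lia.
  - by congr s2; lia.
  - by apply: (inj T2.+1); lia.
have e3 : forall a b c, (a * b * c = b * (a * c))%N by move=> a b c; rewrite mulnCA mulnA.
have ek1 : k1 = (rs1 * (A * rr1))%N by rewrite /k1 /rs1 /rr1 !addn1 mulnC.
have ek2 : k2 = (rs2 * (B * rr2))%N by rewrite /k2 /rs2 /rr2 !addn1 mulnC.
have en : n = maxn (T1.+1 * (A * rr1)) (maxn (T2.+1 * (B * rr2))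
                ((T - T1).+1 * (A * rs1) + (T - T2).+1 * (B * rs2))).
  by rewrite /n /rs1 /rr1 /rs2 /rr2 !addn1 !e3.
by rewrite /= ek1 ek2 en.

Qed.
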